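(* Let $\mathbb{K}$ be an algebraically closed field of characteristic $p$, with $p=0$ or $p\ge5$. Let $(\Gamma_1,\Gamma_2,\Gamma_3)$ and $(\Delta_1,\Delta_2,\Delta_3)$ be two dual $3$-nets of conic-line type of order $n$ in $PG(2,\mathbb{K})$ (with $n<p$ if $p>0$), where $\Gamma_1\cup\Gamma_2$ and $\Delta_1\cup\Delta_2$ lie on irreducible conics, $\Gamma_3$ lies on a line $\ell$ and $\Delta_3$ lies on a line $s$. If $n\ge5$ and $\Gamma_1=\Delta_1$, then $\ell=s$.
   Context: A dual $3$-net of order $n$ in $PG(2,\mathbb{K})$ is a triple of pairwise disjoint point sets, each of size $n$, such that every line meeting two distinct components meets each component in exactly one point. A dual $3$-net of order $n\ge4$ is of conic-line type if two of its components lie on an irreducible conic and the third lies on a line. *)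

(* Defs.v *)
From HB Require Import structures.
From mathcomp Require Import all_boot all_order all_algebra.
Set Implicit Arguments. Unset Strict Implicit. Unset Printing Implicit Defensive.
Import GRing.Theory.
Local Open Scope ring_scope.

(* A nonzero vector of K^3 is normalized when its first nonzero coordinate
   equals 1.  Each point (and each line) of PG(2,K) has exactly one
   normalized homogeneous coordinate vector, so projective equality is
   Leibniz equality on [pt K]. *)
Definition normalized (K : fieldType) (v : 'rV[K]_3) : bool :=
  [exists i : 'I_3, (v 0 i == 1) && [forall j : 'I_3, (j < i)%N ==> (v 0 j == 0)]].

(* Points of PG(2,K); lines are represented by the same type (dual coords). *)
Definition pt (K : fieldType) := {v : 'rV[K]_3 | normalized v}.

Definition inc (K : fieldType) (P L : pt K) : bool :=
  \sum_(i < 3) (val P) 0 i * (val L) 0 i == 0.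

Definition qeval (K : fieldType) (Q : 'M[K]_3) (x : 'rV[K]_3) : K :=
  \sum_(i < 3) \sum_(j < 3) Q i j * x 0 i * x 0 j.

Definition lin (K : fieldType) (u x : 'rV[K]_3) : K := \sum_(i < 3) u 0 i * x 0 i.

(* The quadratic form is irreducible: nonzero and not a product of two
   linear forms (K infinite, so identity of functions = identity of polys). *)
Definition irreducible_conic (K : fieldType) (Q : 'M[K]_3) : Prop :=
  (exists x, qeval Q x != 0) /\
  ~ (exists u v : 'rV[K]_3, forall x, qeval Q x = lin u x * lin v x).

Definition on_conic (K : fieldType) (Q : 'M[K]_3) (P : pt K) : bool :=
  qeval Q (val P) == 0.

Definition meets (K : fieldType) (L : pt K) (A : seq (pt K)) : bool :=
  has (fun P => inc P L) A.

Definition dual3net (K : fieldType) (n : nat) (A1 A2 A3 : seq (pt K)) : Prop :=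
  let comp := [:: A1; A2; A3] in
  [/\ forall i : 'I_3, uniq (nth [::] comp i) /\ size (nth [::] comp i) = n,
      forall i j : 'I_3, i != j ->
        forall P, P \in nth [::] comp i -> P \notin nth [::] comp j &
      forall (L : pt K) (i j : 'I_3), i != j ->
        meets L (nth [::] comp i) -> meets L (nth [::] comp j) ->
        forall k : 'I_3, count (fun P => inc P L) (nth [::] comp k) = 1%N].

(* Main.v *)
Require Import Defs.
From mathcomp Require Import all_boot all_order all_algebra.
From mathcomp Require Import ring.
Import GRing.Theory.
Local Open Scope ring_scope.
Set Implicit Arguments. Unset Strict Implicit. Unset Printing Implicit Defensive.

Section Vec.
Variable K : fieldType.

Record vec := V3 { c0 : K; c1 : K; c2 : K }.

Definition i0 : 'I_3 := @Ordinal 3 0 isT.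
Definition i1 : 'I_3 := @Ordinal 3 1 isT.
Definition i2 : 'I_3 := @Ordinal 3 2 isT.

Lemma sum3 (f : 'I_3 -> K) : \sum_(i < 3) f i = f i0 + f i1 + f i2.
Proof.
rewrite !big_ord_recl big_ord0 addr0 addrA.
by congr (f _ + f _ + f _); apply: val_inj.
Qed.

Lemma ord3P (P : 'I_3 -> Prop) : P i0 -> P i1 -> P i2 -> forall i, P i.
Proof.
move=> H0 H1 H2 [[|[|[|m]]] Hm] //.
- by rewrite (_ : Ordinal Hm = i0) //; apply: val_inj.
- by rewrite (_ : Ordinal Hm = i1) //; apply: val_inj.
- by rewrite (_ : Ordinal Hm = i2) //; apply: val_inj.
Qed.

Definition vsc (k : K) u := V3 (k * c0 u) (k * c1 u) (k * c2 u).
Definition vlc (a b c : K) u v w :=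
  V3 (a * c0 u + b * c0 v + c * c0 w) (a * c1 u + b * c1 v + c * c1 w)
     (a * c2 u + b * c2 v + c * c2 w).
Definition dot u v := c0 u * c0 v + c1 u * c1 v + c2 u * c2 v.
Definition cross u v := V3 (c1 u * c2 v - c2 u * c1 v) (c2 u * c0 v - c0 u * c2 v)
  (c0 u * c1 v - c1 u * c0 v).
Definition det u v w := dot u (cross v w).
Definition v0 := V3 0 0 0.

Lemma vecP u v : c0 u = c0 v -> c1 u = c1 v -> c2 u = c2 v -> u = v.
Proof. by case: u => ? ? ?; case: v => ? ? ? /= -> -> ->. Qed.

Definition tov (x : 'rV[K]_3) := V3 (x 0 i0) (x 0 i1) (x 0 i2).
Definition ofv (v : vec) : 'rV[K]_3 := \row_(j < 3) nth 0 [:: c0 v; c1 v; c2 v] j.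
Lemma tovK v : tov (ofv v) = v.
Proof. by case: v => a b c; rewrite /tov /ofv !mxE. Qed.

Definition tr (P : pt K) := tov (val P).

Lemma linE u x : lin u x = dot (tov u) (tov x).
Proof. by rewrite /lin sum3. Qed.

Lemma incE (P L : pt K) : inc P L = (dot (tr P) (tr L) == 0).
Proof. by rewrite /inc sum3. Qed.

Definition qf (Q : 'M[K]_3) v :=
  Q i0 i0 * c0 v * c0 v + Q i0 i1 * c0 v * c1 v + Q i0 i2 * c0 v * c2 v +
  Q i1 i0 * c1 v * c0 v + Q i1 i1 * c1 v * c1 v + Q i1 i2 * c1 v * c2 v +
  Q i2 i0 * c2 v * c0 v + Q i2 i1 * c2 v * c1 v + Q i2 i2 * c2 v * c2 v.

Lemma qevalE Q x : qeval Q x = qf Q (tov x).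
Proof. by rewrite /qeval !sum3 /qf /=; ring. Qed.

Definition bil Q u v := qf Q (vlc 1 1 0 u v v0) - qf Q u - qf Q v.

Lemma red_conic Q (a b : vec) :
  (forall v, qf Q v = dot a v * dot b v) -> ~ irreducible_conic Q.
Proof.
move=> H [_ []]; exists (ofv a), (ofv b) => x.
by rewrite qevalE !linE !tovK H.
Qed.

Definition nform v := [\/ c0 v = 1, c0 v = 0 /\ c1 v = 1 | [/\ c0 v = 0, c1 v = 0 & c2 v = 1]].

Lemma normE (P : pt K) : nform (tr P).
Proof.
case: P => x Hx; rewrite /nform /tr /tov /=.
case/existsP: Hx => i /andP [/eqP Hi /forallP Hj].
move: i Hi Hj; apply: ord3P => Hi Hj.
- by apply: Or31.
- by apply: Or32; split=> //; apply/eqP; exact: (implyP (Hj i0)).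
- by apply: Or33; split=> //; apply/eqP; [exact: (implyP (Hj i0)) | exact: (implyP (Hj i1))].
Qed.

Lemma normI v : nform v -> normalized (ofv v).
Proof.
case=> [H|[H H']|[H H' H'']]; apply/existsP.
- exists i0; rewrite !mxE /= H eqxx /=; apply/forallP.
  by apply: (@ord3P (fun j => is_true ((j < i0)%N ==> (ofv v 0 j == 0)))).
- exists i1; rewrite !mxE /= H' eqxx /=; apply/forallP.
  by apply: (@ord3P (fun j => is_true ((j < i1)%N ==> (ofv v 0 j == 0)))); rewrite //= !mxE /= H.
- exists i2; rewrite !mxE /= H'' eqxx /=; apply/forallP.
  by apply: (@ord3P (fun j => is_true ((j < i2)%N ==> (ofv v 0 j == 0)))); rewrite //= !mxE /= ?H ?H'.
Qed.

Lemma pt_eq (P Q : pt K) : tr P = tr Q -> P = Q.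
Proof.
move=> E; apply: val_inj; apply/rowP => j.
move: E; rewrite /tr /tov; case=> E0 E1 E2.
by move: j; apply: (@ord3P (fun j => val P 0 j = val Q 0 j)).
Qed.

Lemma norm_eq (P Q : pt K) k : tr P = vsc k (tr Q) -> P = Q.
Proof.
move=> E; apply: pt_eq; move: E.
case: (tr P) (normE P) => a b c; case: (tr Q) (normE Q) => a' b' c'.
rewrite /nform /vsc /=.
have o1 := @oner_neq0 K.
case=> [->|[-> ->]|[-> -> ->]]; case=> [->|[-> ->]|[-> -> ->]]; case;
 rewrite ?mulr0 ?mulr1 => Ea Eb Ec.
all: try (by rewrite Ea eqxx in o1).
all: try (by rewrite Eb eqxx in o1).
all: try (by rewrite Ec eqxx in o1).
all: try (by rewrite -Ea in Eb Ec; rewrite Eb Ec !mul1r).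
all: try (by rewrite -Eb in Ec; rewrite Ec !mul1r).
all: try (by rewrite -Ea mul0r in Eb; rewrite Eb eqxx in o1).
all: try (by rewrite -Ea mul0r in Ec; rewrite Ec eqxx in o1).
all: try (by rewrite -Eb mul0r in Ec; rewrite Ec eqxx in o1).
all: by [].
Qed.


Definition nz1 v :=
  if c0 v != 0 then vsc (c0 v)^-1 v else if c1 v != 0 then vsc (c1 v)^-1 v
  else if c2 v != 0 then vsc (c2 v)^-1 v else V3 1 0 0.

Lemma nz1_form v : nform (nz1 v).
Proof.
rewrite /nz1 /nform /vsc; case: ifP => [/negbTE H|/negbFE/eqP H0].
  by apply: Or31 => /=; rewrite mulVf // H.
case: ifP => [/negbTE H|/negbFE/eqP H1].
  by apply: Or32 => /=; rewrite mulVf ?H // H0 mulr0.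
case: ifP => [/negbTE H|/negbFE/eqP H2].
  by apply: Or33 => /=; rewrite mulVf ?H // H0 H1 mulr0.
by apply: Or31.
Qed.

Definition ptof v : pt K := exist _ (ofv (nz1 v)) (normI (nz1_form v)).

Lemma tr_ptof v : tr (ptof v) = nz1 v.
Proof. by rewrite /tr /= tovK. Qed.

Lemma nz1_sc v : v <> v0 -> exists2 k, k != 0 & nz1 v = vsc k v.
Proof.
move=> Hv; rewrite /nz1; case: ifP => [H|/negbFE/eqP H0].
  by exists (c0 v)^-1; rewrite // invr_eq0 H.
case: ifP => [H|/negbFE/eqP H1].
  by exists (c1 v)^-1; rewrite // invr_eq0 H.
case: ifP => [H|/negbFE/eqP H2].
  by exists (c2 v)^-1; rewrite // invr_eq0 H.
by case: Hv; case: v H0 H1 H2 => /= a b c -> -> ->.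
Qed.

Lemma tr_neq0 (P : pt K) : tr P <> v0.
Proof.
move=> E; have := normE P; rewrite E /nform /=.
have o1 := @oner_neq0 K.
by case=> [|[_]|[_ _]] H; rewrite H eqxx in o1.
Qed.

Lemma solve1 (x y z w : K) : x != 0 -> x * y - z * w = 0 -> y = w / x * z.
Proof. move=> Hx /eqP; rewrite subr_eq0 => /eqP E; apply: (mulfI Hx); by rewrite E; field. Qed.
Lemma solve2 (x y z w : K) : x != 0 -> z * w - x * y = 0 -> y = w / x * z.
Proof. by move=> Hx E; apply: solve1 => //; rewrite -opprB E oppr0. Qed.

Lemma prop_cross u v : u <> v0 -> cross u v = v0 -> exists k, v = vsc k u.
Proof.
case: u => a b c; case: v => a' b' c' /= Hu [E0 E1 E2].
have [Ha|Ha] := eqVneq a 0.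
  have [Hb|Hb] := eqVneq b 0.
    have [Hc|Hc] := eqVneq c 0.
      by case: Hu; rewrite Ha Hb Hc.
    exists (c' / c); apply: vecP => /=.
    - exact: solve1 E1.
    - exact: solve2 E0.
    - by field.
  exists (b' / b); apply: vecP => /=.
  - exact: solve2 E2.
  - by field.
  - exact: solve1 E0.
exists (a' / a); apply: vecP => /=.
- by field.
- exact: solve1 E2.
- exact: solve2 E1.
Qed.

Lemma cross_cross a b v : cross (cross a b) v = vlc (- dot v b) (dot v a) 0 a b b.
Proof. by case: a b v => a0 a1 a2 [b0 b1 b2] [x0 x1 x2]; apply: vecP; rewrite /= /dot /=; ring. Qed.

Lemma cross_perp a b v : cross a b <> v0 -> dot v a = 0 -> dot v b = 0 ->
  exists k, v = vsc k (cross a b).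
Proof.
move=> Hab Ha Hb; apply: prop_cross => //.
rewrite cross_cross Ha Hb.
by case: a b {Hab Ha Hb} => ? ? ? [? ? ?]; apply: vecP => /=; ring.
Qed.

Lemma cross_pt (P Q : pt K) : P != Q -> cross (tr P) (tr Q) <> v0.
Proof.
move=> /eqP PQ E; have [k Ek] := prop_cross (@tr_neq0 P) E.
by apply: PQ; symmetry; apply: norm_eq Ek.
Qed.

Definition line2 (P Q : pt K) := ptof (cross (tr P) (tr Q)).

Lemma inc_line2 (P Q Z : pt K) : P != Q ->
  inc Z (line2 P Q) = (det (tr Z) (tr P) (tr Q) == 0).
Proof.
move=> PQ; rewrite incE /line2 tr_ptof.
have [k k0 ->] := nz1_sc (cross_pt PQ).
rewrite /det.
have -> : dot (tr Z) (vsc k (cross (tr P) (tr Q))) = k * dot (tr Z) (cross (tr P) (tr Q)).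
  by rewrite /dot /=; ring.
by apply/eqP/eqP => [/eqP|->]; rewrite ?mulr0 // mulf_eq0 (negbTE k0) => /eqP.
Qed.

End Vec.

Section Frame.
Variable K : fieldType.
Implicit Types u v w x U W V : vec K.
Implicit Types Q : 'M[K]_3.

Definition fa U W V x := det x W V / det U W V.
Definition fb U W V x := det U x V / det U W V.
Definition fc U W V x := det U W x / det U W V.

Lemma cramer U W V x : det U W V != 0 ->
  x = vlc (fa U W V x) (fb U W V x) (fc U W V x) U W V.
Proof.
move=> HD; rewrite /fa /fb /fc.
case: U W V x HD => u0 u1 u2 [w0 w1 w2] [v0 v1 v2] [x0 x1 x2];
rewrite /det /dot /= => HD; apply: vecP => /=; field => //.
Qed.

Lemma fa_lc U W V a b c : det U W V != 0 -> fa U W V (vlc a b c U W V) = a.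
Proof.
case: U W V => u0 u1 u2 [w0 w1 w2] [v0 v1 v2]; rewrite /fa /det /dot /= => HD; field => //.
Qed.
Lemma fb_lc U W V a b c : det U W V != 0 -> fb U W V (vlc a b c U W V) = b.
Proof.
case: U W V => u0 u1 u2 [w0 w1 w2] [v0 v1 v2]; rewrite /fb /det /dot /= => HD; field => //.
Qed.
Lemma fc_lc U W V a b c : det U W V != 0 -> fc U W V (vlc a b c U W V) = c.
Proof.
case: U W V => u0 u1 u2 [w0 w1 w2] [v0 v1 v2]; rewrite /fc /det /dot /= => HD; field => //.
Qed.

Definition det3 (a b c a' b' c' a'' b'' c'' : K) :=
  a * (b' * c'' - c' * b'') - b * (a' * c'' - c' * a'') + c * (a' * b'' - b' * a'').

Lemma det_lc U W V a b c a' b' c' a'' b'' c'' :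
  det (vlc a b c U W V) (vlc a' b' c' U W V) (vlc a'' b'' c'' U W V) =
  det3 a b c a' b' c' a'' b'' c'' * det U W V.
Proof.
case: U W V => u0 u1 u2 [w0 w1 w2] [v0 v1 v2]; rewrite /det3 /det /dot /=; ring.
Qed.

Lemma fa_dot U W V x : fa U W V x = dot (vsc (det U W V)^-1 (cross W V)) x.
Proof. by case: U W V x => ? ? ? [? ? ?] [? ? ?] [? ? ?]; rewrite /fa /det /dot /=; ring. Qed.
Lemma fb_dot U W V x : fb U W V x = dot (vsc (det U W V)^-1 (cross V U)) x.
Proof. by case: U W V x => ? ? ? [? ? ?] [? ? ?] [? ? ?]; rewrite /fb /det /dot /=; ring. Qed.
Lemma fc_dot U W V x : fc U W V x = dot (vsc (det U W V)^-1 (cross U W)) x.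
Proof. by case: U W V x => ? ? ? [? ? ?] [? ? ?] [? ? ?]; rewrite /fc /det /dot /=; ring. Qed.

Lemma dot_lc3 (a b c : K) p q r x :
  a * dot p x + b * dot q x + c * dot r x = dot (vlc a b c p q r) x.
Proof. by case: p q r x => ? ? ? [? ? ?] [? ? ?] [? ? ?]; rewrite /dot /=; ring. Qed.

Lemma red_frame Q U W V (a b c a' b' c' : K) : det U W V != 0 ->
  (forall x, qf Q x = (a * fa U W V x + b * fb U W V x + c * fc U W V x) *
                      (a' * fa U W V x + b' * fb U W V x + c' * fc U W V x)) ->
  ~ irreducible_conic Q.
Proof.
move=> HD H; apply: (@red_conic _ Q
  (vlc a b c (vsc (det U W V)^-1 (cross W V)) (vsc (det U W V)^-1 (cross V U)) (vsc (det U W V)^-1 (cross U W)))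
  (vlc a' b' c' (vsc (det U W V)^-1 (cross W V)) (vsc (det U W V)^-1 (cross V U)) (vsc (det U W V)^-1 (cross U W)))).
by move=> x; rewrite H -!dot_lc3 -fa_dot -fb_dot -fc_dot.
Qed.

Lemma qf_lc Q U W V a b c : qf Q (vlc a b c U W V) =
  a ^+ 2 * qf Q U + b ^+ 2 * qf Q W + c ^+ 2 * qf Q V +
  a * b * bil Q U W + a * c * bil Q U V + b * c * bil Q W V.
Proof.
case: U W V => u0 u1 u2 [w0 w1 w2] [v0 v1 v2]; rewrite /bil /qf /=; ring.
Qed.

Lemma bil_sym Q u v : bil Q u v = bil Q v u.
Proof. by case: u v => ? ? ? [? ? ?]; rewrite /bil /qf /=; ring. Qed.

Definition grad (Q : 'M[K]_3) u :=
  V3 ((Q i0 i0 + Q i0 i0) * c0 u + (Q i0 i1 + Q i1 i0) * c1 u + (Q i0 i2 + Q i2 i0) * c2 u)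
     ((Q i1 i0 + Q i0 i1) * c0 u + (Q i1 i1 + Q i1 i1) * c1 u + (Q i1 i2 + Q i2 i1) * c2 u)
     ((Q i2 i0 + Q i0 i2) * c0 u + (Q i2 i1 + Q i1 i2) * c1 u + (Q i2 i2 + Q i2 i2) * c2 u).

Lemma bil_grad Q u x : bil Q u x = dot (grad Q u) x.
Proof. by case: u x => ? ? ? [? ? ?]; rewrite /bil /qf /dot /=; ring. Qed.

Lemma det_grad Q u v :
  det u (cross (grad Q u) (grad Q v)) v = bil Q u v ^+ 2 - 4%:R * qf Q u * qf Q v.
Proof. by case: u v => ? ? ? [? ? ?]; rewrite /bil /qf /det /dot /=; ring. Qed.

Lemma dot_cross_self (a b : vec K) : dot a (cross a b) = 0.
Proof. by case: a b => ? ? ? [? ? ?]; rewrite /dot /=; ring. Qed.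
Lemma dot_cross_self2 (a b : vec K) : dot b (cross a b) = 0.
Proof. by case: a b => ? ? ? [? ? ?]; rewrite /dot /=; ring. Qed.

Lemma exists_third u v : cross u v <> v0 K -> exists w, det u w v != 0.
Proof.
case: u v => a b c [a' b' c'] /= H.
have [E0|E0] := eqVneq (b * c' - c * b') 0.
  have [E1|E1] := eqVneq (c * a' - a * c') 0.
    have [E2|E2] := eqVneq (a * b' - b * a') 0.
      by case: H; rewrite /cross /= E0 E1 E2.
    exists (V3 0 0 1); rewrite /det /dot /=.
    by move: E2; apply: contra => /eqP E; rewrite -oppr_eq0 -E; apply/eqP; ring.
  exists (V3 0 1 0); rewrite /det /dot /=.
  by move: E1; apply: contra => /eqP E; rewrite -oppr_eq0 -E; apply/eqP; ring.
exists (V3 1 0 0); rewrite /det /dot /=.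
by move: E0; apply: contra => /eqP E; rewrite -oppr_eq0 -E; apply/eqP; ring.
Qed.

End Frame.

Section Net.
Variables (K : fieldType) (n : nat) (A1 A2 A3 : seq (pt K)).
Hypothesis HN : dual3net n A1 A2 A3.

Lemma net_us1 : uniq A1 /\ size A1 = n. Proof. by case: HN => H _ _; exact: (H i0). Qed.
Lemma net_us2 : uniq A2 /\ size A2 = n. Proof. by case: HN => H _ _; exact: (H i1). Qed.
Lemma net_us3 : uniq A3 /\ size A3 = n. Proof. by case: HN => H _ _; exact: (H i2). Qed.

Lemma net_d12 P : P \in A1 -> P \notin A2. Proof. by case: HN => _ H _; exact: (H i0 i1 isT). Qed.
Lemma net_d13 P : P \in A1 -> P \notin A3. Proof. by case: HN => _ H _; exact: (H i0 i2 isT). Qed.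
Lemma net_d23 P : P \in A2 -> P \notin A3. Proof. by case: HN => _ H _; exact: (H i1 i2 isT). Qed.

Lemma net_c12_3 L : meets L A1 -> meets L A2 -> count (fun P => inc P L) A3 = 1%N.
Proof. by move=> M1 M2; case: HN => _ _ H; exact: (H L i0 i1 isT M1 M2 i2). Qed.
Lemma net_c13_2 L : meets L A1 -> meets L A3 -> count (fun P => inc P L) A2 = 1%N.
Proof. by move=> M1 M2; case: HN => _ _ H; exact: (H L i0 i2 isT M1 M2 i1). Qed.
Lemma net_c13_3 L : meets L A1 -> meets L A3 -> count (fun P => inc P L) A3 = 1%N.
Proof. by move=> M1 M2; case: HN => _ _ H; exact: (H L i0 i2 isT M1 M2 i2). Qed.
Lemma net_c23_3 L : meets L A2 -> meets L A3 -> count (fun P => inc P L) A3 = 1%N.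
Proof. by move=> M1 M2; case: HN => _ _ H; exact: (H L i1 i2 isT M1 M2 i2). Qed.

End Net.

Lemma count1_has (T : eqType) (p : pred T) s : count p s = 1%N -> exists2 x, x \in s & p x.
Proof. by move=> H; apply/hasP; rewrite has_count H. Qed.

Lemma meetsI (K : fieldType) (L P : pt K) s : P \in s -> inc P L -> meets L s.
Proof. by move=> Ps PL; apply/hasP; exists P. Qed.

Lemma perm_map_self (T : eqType) (f : T -> T) s :
  uniq s -> {in s, forall x, f x \in s} -> {in s &, injective f} -> perm_eq (map f s) s.
Proof.
move=> us fs fi; have um : uniq (map f s) by rewrite map_inj_in_uniq.
have sub : {subset map f s <= s} by move=> y /mapP [x xs ->]; exact: fs.
have [_ E] := uniq_min_size um sub (eq_leq (esym (size_map f s))).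
exact: uniq_perm.
Qed.

Lemma prod_scale (K : fieldType) (k : K) s : \prod_(x <- s) (k * x) = k ^+ size s * \prod_(x <- s) x.
Proof.
elim: s => [|x s IH]; first by rewrite !big_nil mulr1.
by rewrite !big_cons IH exprS; ring.
Qed.

Lemma sum_shift (K : fieldType) (k : K) s : \sum_(x <- s) (x + k) = \sum_(x <- s) x + k *+ size s.
Proof.
elim: s => [|x s IH]; first by rewrite !big_nil addr0.
by rewrite !big_cons IH /= mulrS; ring.
Qed.

Section Alg.
Variable K : fieldType.
Implicit Types u v w x U W V : vec K.

Lemma dotC u v : dot u v = dot v u.
Proof. by case: u v => ? ? ? [? ? ?]; rewrite /dot /=; ring. Qed.
Lemma dot_vlc L a b c U W V : dot L (vlc a b c U W V) = a * dot L U + b * dot L W + c * dot L V.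
Proof. by case: L U W V => ? ? ? [? ? ?] [? ? ?] [? ? ?]; rewrite /dot /=; ring. Qed.
Lemma dot_vsc L k u : dot L (vsc k u) = k * dot L u.
Proof. by case: L u => ? ? ? [? ? ?]; rewrite /dot /=; ring. Qed.
Lemma qf_vsc Q k u : qf Q (vsc k u) = k ^+ 2 * qf Q u.
Proof. by case: u => ? ? ?; rewrite /qf /=; ring. Qed.
Lemma bil_vsc Q k u v : bil Q (vsc k u) v = k * bil Q u v.
Proof. by case: u v => ? ? ? [? ? ?]; rewrite /bil /qf /=; ring. Qed.
Lemma det_vsc k U W V : det (vsc k U) W V = k * det U W V.
Proof. by case: U W V => ? ? ? [? ? ?] [? ? ?]; rewrite /det /dot /=; ring. Qed.
Lemma vsc_div a b u : b != 0 -> vsc a u = vsc (a / b) (vsc b u).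
Proof. by case: u => ? ? ? Hb; apply: vecP => /=; field. Qed.
Lemma det_swap u v w : det u v w = - det u w v.
Proof. by case: u v w => ? ? ? [? ? ?] [? ? ?]; rewrite /det /dot /=; ring. Qed.
Lemma det_cyc u v w : det u v w = det v w u.
Proof. by case: u v w => ? ? ? [? ? ?] [? ? ?]; rewrite /det /dot /=; ring. Qed.
Lemma det_rep12 u v : det u u v = 0.
Proof. by case: u v => ? ? ? [? ? ?]; rewrite /det /dot /=; ring. Qed.
Lemma det_rep13 u v : det u v u = 0.
Proof. by case: u v => ? ? ? [? ? ?]; rewrite /det /dot /=; ring. Qed.
Lemma vsc_vlc k a b c U W V : vsc k (vlc a b c U W V) = vlc (k * a) (k * b) (k * c) U W V.
Proof. by case: U W V => ? ? ? [? ? ?] [? ? ?]; apply: vecP => /=; ring. Qed.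
Lemma cross_lc1 (x : K) u v : cross (vlc 1 x 0 u v v) v = cross u v.
Proof. by case: u v => ? ? ? [? ? ?]; apply: vecP => /=; ring. Qed.
Lemma cross_0l v : cross (v0 K) v = v0 K.
Proof. by case: v => ? ? ?; apply: vecP => /=; ring. Qed.
Lemma vlc_eq0 a b c U W V : det U W V != 0 -> vlc a b c U W V = v0 K -> [/\ a = 0, b = 0 & c = 0].
Proof.
move=> HD E; split.
- by rewrite -(fa_lc a b c HD) E /fa /det /dot /=; ring.
- by rewrite -(fb_lc a b c HD) E /fb /det /dot /=; ring.
- by rewrite -(fc_lc a b c HD) E /fc /det /dot /=; ring.
Qed.
Lemma det_lc' U W V a b c a' b' c' :
  det (vlc a b c U W V) (vlc a' b' c' U W V) U = det3 a b c a' b' c' 1 0 0 * det U W V.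
Proof. case: U W V => ? ? ? [? ? ?] [? ? ?]; rewrite /det3 /det /dot /=; ring. Qed.
Lemma param_form (cc c r : K) U W V : cc != 0 ->
  vsc c (vlc (r ^+ 2) r 1 U W V) =
  vsc (c / cc ^+ 2) (vlc 1 (1 + cc * r) ((1 + cc * r) ^+ 2)
      (vlc 1 (- cc) (cc ^+ 2) U W V) (vlc (- 2%:R) cc 0 U W V) U).
Proof. by case: U W V => ? ? ? [? ? ?] [? ? ?] Hc; apply: vecP => /=; field. Qed.
End Alg.

Section Lemma1.
Variables (K : closedFieldType) (n : nat) (A1 A2 A3 : seq (pt K)) (Q : 'M[K]_3) (l : pt K).
Hypotheses (Hn : (2 <= n)%N) (Hn0 : n%:R != 0 :> K) (HN : dual3net n A1 A2 A3)
  (HQ : irreducible_conic Q) (HC : {in A1 ++ A2, forall P, on_conic Q P})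
  (HL : {in A3, forall P, inc P l}).

Let L := tr l.

Lemma A3_l : exists P, P \in A3.
Proof.
have [_ s3] := net_us3 HN; exists (nth l A3 0); apply: mem_nth; rewrite s3; exact: leq_trans Hn.
Qed.

Lemma count_A3 : count (fun P => inc P l) A3 = n.
Proof.
have [_ s3] := net_us3 HN; rewrite -s3; apply/eqP; rewrite -all_count; apply/allP => P; exact: HL.
Qed.

Lemma no_l1 P : P \in A1 -> dot (tr P) L != 0.
Proof.
move=> P1; rewrite -incE; apply/negP => Pl.
have [R R3] := A3_l.
have := net_c13_3 HN (meetsI P1 Pl) (meetsI R3 (HL R3)).
by rewrite count_A3 => E; move: Hn; rewrite E.
Qed.

Lemma no_l2 P : P \in A2 -> dot (tr P) L != 0.
Proof.
move=> P1; rewrite -incE; apply/negP => Pl.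
have [R R3] := A3_l.
have := net_c23_3 HN (meetsI P1 Pl) (meetsI R3 (HL R3)).
by rewrite count_A3 => E; move: Hn; rewrite E.
Qed.

Lemma no_l12 P : P \in A1 ++ A2 -> dot (tr P) L != 0.
Proof. by rewrite mem_cat => /orP [/no_l1|/no_l2]. Qed.

Lemma conic12 P : P \in A1 ++ A2 -> qf Q (tr P) = 0.
Proof. by move=> /HC /eqP; rewrite qevalE. Qed.

Lemma step_U : exists U, [/\ U <> v0 K, dot U L = 0 & qf Q U = 0].
Proof.
have [u3 s3] := net_us3 HN.
have i0n : (0 < size A3)%N by rewrite s3; exact: leq_trans Hn.
have i1n : (1 < size A3)%N by rewrite s3.
set P1 := nth l A3 0; set P2 := nth l A3 1.
have P1l : dot (tr P1) L = 0 by apply/eqP; rewrite -incE; apply: HL; exact: mem_nth.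
have P2l : dot (tr P2) L = 0 by apply/eqP; rewrite -incE; apply: HL; exact: mem_nth.
have P12 : P1 != P2 by rewrite /P1 /P2 nth_uniq.
have C12 := cross_pt P12.
have [q2|q2] := eqVneq (qf Q (tr P2)) 0.
  by exists (tr P2); split=> //; exact: tr_neq0.
have [x Hx] := @GRing.solve_monicpoly K 2
   (fun i => if i == 0%N then - qf Q (tr P1) / qf Q (tr P2) else - bil Q (tr P1) (tr P2) / qf Q (tr P2)) isT.
rewrite !big_ord_recl big_ord0 /= addr0 in Hx.
exists (vlc 1 x 0 (tr P1) (tr P2) (tr P2)); split.
- by move=> E; apply: C12; rewrite -(cross_lc1 x) E cross_0l.
- by rewrite dotC dot_vlc !(dotC L) P1l P2l; ring.
- rewrite qf_lc; have -> : x ^+ 2 = x ^+ 2 by [].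
  rewrite Hx; field => //.
Qed.


Section Frame1.
Variables (U0 : vec K) (HU0 : U0 <> v0 K) (U0L : dot U0 L = 0) (U0q : qf Q U0 = 0).

Let X0 := nth l A1 0.
Lemma X0in : X0 \in A1.
Proof. have [_ s1] := net_us1 HN; apply: mem_nth; rewrite s1; exact: leq_trans Hn. Qed.
Let V := tr X0.
Lemma Vq : qf Q V = 0.
Proof. by apply: conic12; rewrite mem_cat X0in. Qed.
Lemma VL : dot V L != 0.
Proof. exact: no_l1 X0in. Qed.
Lemma UV : cross U0 V <> v0 K.
Proof.
move=> E; have [k Ek] := prop_cross HU0 E; have := VL.
by rewrite Ek dotC dot_vsc dotC U0L mulr0 eqxx.
Qed.
Let B := bil Q U0 V.
Lemma B0 : B != 0.
Proof.
apply/negP => /eqP B0; have [w Hw] := exists_third UV.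
apply: (fun H => @red_frame _ Q U0 w V 0 1 0 (bil Q U0 w) (qf Q w) (bil Q w V) Hw H HQ) => x.
rewrite {1}(cramer x Hw) qf_lc U0q Vq -/B B0; ring.
Qed.
Let W0 := cross (grad Q U0) (grad Q V).
Lemma BUW : bil Q U0 W0 = 0. Proof. by rewrite bil_grad dot_cross_self. Qed.
Lemma BWV : bil Q W0 V = 0. Proof. by rewrite bil_sym bil_grad dot_cross_self2. Qed.
Lemma D0n : det U0 W0 V != 0.
Proof. by rewrite det_grad U0q Vq mulr0 subr0 sqrf_eq0 B0. Qed.
Lemma qW : qf Q W0 != 0.
Proof.
apply/negP => /eqP q0.
apply: (fun H => @red_frame _ Q U0 W0 V 1 0 0 0 0 B D0n H HQ) => x.
rewrite {1}(cramer x D0n) qf_lc U0q Vq q0 BUW BWV; rewrite /B; ring.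
Qed.
Let kap := - qf Q W0 / B.
Lemma kap0 : kap != 0.
Proof. by rewrite /kap mulf_neq0 ?invr_eq0 ?oppr_eq0 ?qW ?B0. Qed.
Let U1 := vsc kap U0.
Lemma D1n : det U1 W0 V != 0.
Proof. by rewrite det_vsc mulf_neq0 ?kap0 ?D0n. Qed.
Lemma U1L : dot L U1 = 0.
Proof. by rewrite dot_vsc dotC U0L mulr0. Qed.
Let fa' := fa U1 W0 V.
Let fb' := fb U1 W0 V.
Let fc' := fc U1 W0 V.
Lemma conic_norm x : qf Q x = qf Q W0 * (fb' x ^+ 2 - fa' x * fc' x).
Proof.
rewrite {1}(cramer x D1n) qf_lc qf_vsc U0q !bil_vsc BUW BWV Vq -/fa' -/fb' -/fc' -/B /kap.
field; exact: B0.
Qed.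


Lemma fc_nz P : P \in A1 ++ A2 -> fc' (tr P) != 0.
Proof.
move=> HP; apply/negP => /eqP c0.
have := conic_norm (tr P); rewrite conic12 // c0 mulr0 subr0 => /esym/eqP.
rewrite mulf_eq0 (negbTE qW) /= sqrf_eq0 => /eqP b0.
have := no_l12 HP; rewrite {1}(cramer (tr P) D1n) -/fa' -/fb' -/fc' b0 c0.
by rewrite dotC dot_vlc U1L !mul0r !mulr0 !addr0 eqxx.
Qed.

Definition rho P := fb' (tr P) / fc' (tr P).

Lemma param P : P \in A1 ++ A2 ->
  tr P = vsc (fc' (tr P)) (vlc (rho P ^+ 2) (rho P) 1 U1 W0 V).
Proof.
move=> HP; have c0 := fc_nz HP.
have := conic_norm (tr P); rewrite conic12 // => /esym/eqP.
rewrite mulf_eq0 (negbTE qW) /= subr_eq0 => /eqP E.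
rewrite {1}(cramer (tr P) D1n) -/fa' -/fb' -/fc' vsc_vlc /rho.
have -> : fa' (tr P) = fb' (tr P) ^+ 2 / fc' (tr P) by rewrite E; field.
by congr vlc; field.
Qed.

Lemma rho_inj : {in A1 ++ A2 &, injective rho}.
Proof.
move=> P P' HP HP' E.
have E1 := param HP; have E2 := param HP'; have c0 := fc_nz HP'.
set c := fc' (tr P) in E1; set c' := fc' (tr P') in E2 c0.
apply: (@norm_eq _ P P' (c / c')).
rewrite E1 E2 E; exact: vsc_div.
Qed.

Let sig1 := dot L W0.
Let sig2 := dot L V.
Lemma sig2n : sig2 != 0. Proof. by rewrite /sig2 dotC VL. Qed.

Definition theta r s := sig1 * r * s + sig2 * (r + s).

Lemma onl_coords R : dot R L = 0 -> fb' R * sig1 + fc' R * sig2 = 0.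
Proof.
move=> RL; have := RL; rewrite dotC.
have EX := cramer R D1n.
by rewrite [X in dot L X]EX dot_vlc U1L mulr0 add0r.
Qed.

Lemma chord_R R x y : x \in A1 ++ A2 -> y \in A1 ++ A2 -> x != y ->
  dot R L = 0 -> det R (tr x) (tr y) = 0 ->
  fb' R * theta (rho x) (rho y) = sig2 * fa' R.
Proof.
move=> Hx Hy xy RL Hd.
have rs : rho x != rho y by apply: contra xy => /eqP /rho_inj; move=> /(_ Hx Hy) ->.
have cx := fc_nz Hx; have cy := fc_nz Hy.
have H2 := onl_coords RL.
move: Hd; rewrite (param Hx) (param Hy) {1}(cramer R D1n) -/fa' -/fb' -/fc' !vsc_vlc det_lc.
set ra := fa' R; set rb := fb' R; set rc := fc' R.
set r := rho x in rs *; set s' := rho y in rs *; set cx' := fc' (tr x) in cx *; set cy' := fc' (tr y) in cy *.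
have -> : det3 ra rb rc (cx' * r ^+ 2) (cx' * r) (cx' * 1) (cy' * s' ^+ 2) (cy' * s') (cy' * 1) =
   cx' * cy' * (r - s') * (ra - rb * (r + s') + rc * r * s') by rewrite /det3; ring.
move/eqP => H0.
have /eqP Era : ra - rb * (r + s') + rc * r * s' == 0.
  apply/negPn/negP => Hne.
  have : cx' * cy' * (r - s') * (ra - rb * (r + s') + rc * r * s') * det U1 W0 V != 0.
    apply: mulf_neq0; last exact: D1n; apply: mulf_neq0 => //; apply: mulf_neq0; [exact: mulf_neq0|by rewrite subr_eq0].
  by rewrite H0 => /eqP.
apply/eqP; rewrite -subr_eq0.
have -> : rb * theta r s' - sig2 * ra = r * s' * (rb * sig1 + rc * sig2) - sig2 * (ra - rb * (r + s') + rc * r * s').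
  by rewrite /theta; ring.
by rewrite H2 Era !mulr0 subr0.
Qed.

Lemma chord_step x y x' : x \in A1 -> y \in A2 -> x' \in A1 ->
  exists2 y', y' \in A2 & theta (rho x) (rho y) = theta (rho x') (rho y').
Proof.
move=> x1 y2 x1'.
have in1 z : z \in A1 -> z \in A1 ++ A2 by rewrite mem_cat => ->.
have in2 z : z \in A2 -> z \in A1 ++ A2 by rewrite mem_cat => ->; rewrite orbT.
have xy : x != y by apply/eqP => E; move: (net_d12 HN x1); rewrite E y2.
have incx : inc x (line2 x y) by rewrite inc_line2 // det_rep12.
have incy : inc y (line2 x y) by rewrite inc_line2 // det_rep13.
have [R R3 RL] := count1_has (net_c12_3 HN (meetsI x1 incx) (meetsI y2 incy)).
move: RL; rewrite inc_line2 // => /eqP RL.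
have Rl : dot (tr R) L = 0 by apply/eqP; rewrite -incE; exact: HL.
have x'R : x' != R by apply/eqP => E; move: (net_d13 HN x1'); rewrite E R3.
have incx' : inc x' (line2 x' R) by rewrite inc_line2 // det_rep12.
have incR : inc R (line2 x' R) by rewrite inc_line2 // det_rep13.
have [y' y2' y'L] := count1_has (net_c13_2 HN (meetsI x1' incx') (meetsI R3 incR)).
move: y'L; rewrite inc_line2 // det_cyc det_cyc det_swap oppr_eq0 => /eqP y'L.
have x'y' : x' != y' by apply/eqP => E; move: (net_d12 HN x1'); rewrite E y2'.
exists y' => //.
have E1 := chord_R (in1 _ x1) (in2 _ y2) xy Rl RL.
have E2 := chord_R (in1 _ x1') (in2 _ y2') x'y' Rl y'L.
have rb0 : fb' (tr R) != 0.
  apply/negP => /eqP rb0; have H2 := onl_coords Rl.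
  move: E1; rewrite rb0 mul0r => /esym/eqP; rewrite mulf_eq0 (negbTE sig2n) /= => /eqP ra0.
  move: H2; rewrite rb0 mul0r add0r => /eqP; rewrite mulf_eq0 (negbTE sig2n) orbF => /eqP rc0.
  apply: (@tr_neq0 _ R); rewrite (cramer (tr R) D1n) -/fa' -/fb' -/fc' ra0 rb0 rc0.
  by apply: vecP => /=; ring.
by apply: (mulfI rb0); rewrite E1 E2.
Qed.

Lemma in1 z : z \in A1 -> z \in A1 ++ A2. Proof. by rewrite mem_cat => ->. Qed.
Lemma in2 z : z \in A2 -> z \in A1 ++ A2. Proof. by rewrite mem_cat => ->; rewrite orbT. Qed.

Lemma two_A1 : exists x x', [/\ x \in A1, x' \in A1 & x != x'].
Proof.
have [u1 s1] := net_us1 HN.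
have h0 : (0 < size A1)%N by rewrite s1; exact: leq_trans Hn.
have h1 : (1 < size A1)%N by rewrite s1.
exists (nth l A1 0), (nth l A1 1); split; try exact: mem_nth.
by rewrite nth_uniq.
Qed.

Lemma sig1_nz : sig1 != 0.
Proof.
apply/negP => /eqP s0.
have [u2 s2] := net_us2 HN.
have key x x' : x \in A1 -> x' \in A1 -> rho x = rho x'.
  move=> Hx Hx'; set k := rho x - rho x'.
  set S := map rho A2.
  have uS : uniq S.
    rewrite map_inj_in_uniq // => y y' Hy Hy'; apply: rho_inj; exact: in2.
  have pS : perm_eq (map (fun v => v + k) S) S.
    apply: perm_map_self => //; last by move=> v v' _ _; exact: addIr.
    move=> v /mapP [y y2 ->]; have [y' y2' E] := chord_step Hx y2 Hx'.
    move: E; rewrite /theta s0 !mul0r !add0r => /(mulfI sig2n) E.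
    apply/mapP; exists y' => //; rewrite /k; apply/eqP; rewrite -subr_eq0; apply/eqP.
    by rewrite -[rho y'](addKr (rho x')) -E; ring.
  have : \sum_(v <- map (fun v => v + k) S) v = \sum_(v <- S) v by exact: perm_big.
  rewrite big_map sum_shift.
  move/eqP; rewrite -subr_eq0 addrAC subrr add0r size_map s2 => /eqP.
  rewrite -mulr_natr => /eqP; rewrite mulf_eq0 (negbTE Hn0) orbF => /eqP.
  by rewrite /k => /eqP; rewrite subr_eq0 => /eqP.
have [x [x' [Hx Hx' xx']]] := two_A1.
by move: xx'; rewrite (rho_inj (in1 Hx) (in1 Hx') (key _ _ Hx Hx')) eqxx.
Qed.

Let cc := sig1 / sig2.
Definition mm r := 1 + cc * r.
Lemma cc0 : cc != 0. Proof. by rewrite mulf_neq0 ?invr_eq0 ?sig1_nz ?sig2n. Qed.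

Lemma dot_param P : P \in A1 ++ A2 -> dot (tr P) L = fc' (tr P) * (sig2 * mm (rho P)).
Proof.
move=> HP; rewrite dotC {1}(param HP) dot_vsc dot_vlc U1L -/sig1 -/sig2 /mm /cc.
field; exact: sig2n.
Qed.

Lemma mm_nz P : P \in A1 ++ A2 -> mm (rho P) != 0.
Proof.
move=> HP; apply/negP => /eqP m0; have := no_l12 HP.
by rewrite dot_param // m0 !mulr0 eqxx.
Qed.

Lemma mm_inj : injective mm.
Proof. by move=> r r' /addrI /(mulfI cc0). Qed.

Lemma mm_pow x x' : x \in A1 -> x' \in A1 -> mm (rho x) ^+ n = mm (rho x') ^+ n.
Proof.
move=> Hx Hx'; have [u2 s2] := net_us2 HN.
have m0' := mm_nz (in1 Hx').
set k := mm (rho x) / mm (rho x').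
have k0 : k != 0 by rewrite mulf_neq0 ?invr_eq0 ?mm_nz ?in1.
set S := map (fun y => mm (rho y)) A2.
have uS : uniq S.
  rewrite map_inj_in_uniq // => y y' Hy Hy' /mm_inj; apply: rho_inj; exact: in2.
have pS : perm_eq (map (fun v => k * v) S) S.
  apply: perm_map_self => //; last by move=> v v' _ _; exact: mulfI.
  move=> v /mapP [y y2 ->]; have [y' y2' E] := chord_step Hx y2 Hx'.
  apply/mapP; exists y' => //; rewrite /k.
  have s2n := sig2n; move: E; rewrite /theta /mm /cc => E.
  apply: (mulfI m0'); rewrite /mm /cc.
  rewrite mulrA mulrCA divff ?mulr1; last by move: m0'; rewrite /mm /cc.
  apply/eqP; rewrite -subr_eq0; apply/eqP.
  have -> : (1 + sig1 / sig2 * rho x) * (1 + sig1 / sig2 * rho y) -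
    (1 + sig1 / sig2 * rho x') * (1 + sig1 / sig2 * rho y') =
    sig1 / sig2 ^+ 2 * ((sig1 * rho x * rho y + sig2 * (rho x + rho y)) -
                        (sig1 * rho x' * rho y' + sig2 * (rho x' + rho y'))).
    by field.
  by rewrite E subrr mulr0.
have : \prod_(v <- map (fun v => k * v) S) v = \prod_(v <- S) v by exact: perm_big.
rewrite big_map prod_scale size_map s2 => E.
have P0 : \prod_(v <- S) v != 0.
  rewrite prodf_seq_neq0; apply/allP => v /mapP [y y2 ->] /=; exact: mm_nz (in2 y2).
have : k ^+ n = 1.
  by apply: (mulIf P0); rewrite mul1r.
rewrite /k expr_div_n => /eqP; rewrite -(can_eq (mulfK (expf_neq0 n m0'))) mul1r.
by rewrite mulrAC -mulrA divff ?mulr1 ?expf_neq0 // => /eqP.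
Qed.

Lemma frame_out : exists Us Ws Vs al, [/\ det Us Ws Vs != 0, dot L Us = 0, dot L Vs = 0,
  al != 0 & forall P, P \in A1 -> exists m, m ^+ n = al /\
     exists2 mu, mu != 0 & tr P = vsc mu (vlc 1 m (m ^+ 2) Us Ws Vs)].
Proof.
have c0 := cc0; have s2n := sig2n.
exists (vlc 1 (- cc) (cc ^+ 2) U1 W0 V), (vlc (- 2%:R) cc 0 U1 W0 V), U1, (mm (rho X0) ^+ n); split.
- rewrite det_lc' mulf_neq0 ?D1n //.
  have -> : det3 1 (- cc) (cc ^+ 2) (- 2%:R) cc 0 1 0 0 = - cc ^+ 3 by rewrite /det3; ring.
  by rewrite oppr_eq0 expf_neq0.
- by rewrite dot_vlc U1L -/sig1 -/sig2 /cc; field.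
- exact: U1L.
- by rewrite expf_neq0 // mm_nz // in1 // X0in.
- move=> P HP; exists (mm (rho P)); split; first exact: mm_pow HP X0in.
  exists (fc' (tr P) / cc ^+ 2).
    by rewrite mulf_neq0 ?invr_eq0 ?expf_neq0 // fc_nz // in1.
  by rewrite {1}(param (in1 HP)) (@param_form _ cc).
Qed.

End Frame1.

Lemma frame_exists : exists Us Ws Vs al, [/\ det Us Ws Vs != 0, dot L Us = 0, dot L Vs = 0,
  al != 0 & forall P, P \in A1 -> exists m, m ^+ n = al /\
     exists2 mu, mu != 0 & tr P = vsc mu (vlc 1 m (m ^+ 2) Us Ws Vs)].
Proof. have [U [HU UL Uq]] := step_U; exact: frame_out HU UL Uq. Qed.
End Lemma1.

Section Mob.
Variable K : fieldType.

Lemma dlin (c0 c1 : K) k :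
  ((c1%:P * 'X + c0%:P) ^+ k.+1)^`() = c1%:P * (c1%:P * 'X + c0%:P) ^+ k *+ k.+1.
Proof. by rewrite deriv_exp derivMXaddC derivC mul0r addr0. Qed.

Lemma hlin (c0 c1 t : K) : (c1%:P * 'X + c0%:P).[t] = c0 + c1 * t.
Proof. by rewrite !hornerE addrC. Qed.

Lemma size_lin (c0 c1 : K) : (size (c1%:P * 'X + c0%:P)%R <= 2)%N.
Proof.
rewrite size_MXaddC; case: ifP => // _; rewrite ltnS; exact: size_polyC_leq1.
Qed.

Lemma mob (m : nat) (p0 p1 q0 q1 al al' : K) (rs : seq K) :
  m.+3%:R != 0 :> K -> m.+2%:R != 0 :> K -> al != 0 -> p0 * q1 - p1 * q0 != 0 ->
  uniq rs -> size rs = m.+3 -> (forall t, t \in rs -> t ^+ m.+3 = al') ->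
  (forall t, t \in rs -> (q0 + q1 * t) ^+ m.+3 = al * (p0 + p1 * t) ^+ m.+3) ->
  (q0 = 0 /\ p1 = 0) \/ (q1 = 0 /\ p0 = 0).
Proof.
move=> n0 n1 al0 nd urs srs Hal Hrs.
set n := m.+3.
set p := p1%:P * 'X + p0%:P; set q := q1%:P * 'X + q0%:P.
have [F EF0] : {F | F = q ^+ n - al *: p ^+ n} by exists (q ^+ n - al *: p ^+ n).
have sF : (size F <= n.+1)%N.
  rewrite EF0 (leq_trans (size_add _ _)) // size_opp geq_max; apply/andP; split.
    apply: (leq_trans (size_exp_leq _ _)); rewrite ltnS.
    have := size_lin q0 q1; rewrite -/q => sq.
    by rewrite -[X in (_ <= X)%N]mul1n leq_mul2r; apply/orP; right; move: sq; case: (size q) => [|[|[|k]]].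
  apply: (leq_trans (size_scale_leq _ _)); apply: (leq_trans (size_exp_leq _ _)); rewrite ltnS.
  have := size_lin p0 p1; rewrite -/p => sq.
  by rewrite -[X in (_ <= X)%N]mul1n leq_mul2r; apply/orP; right; move: sq; case: (size p) => [|[|[|k]]].
set G := F - F`_n *: ('X^n - al'%:P).
have sG : (size G <= n)%N.
  apply/leq_sizeP => j; rewrite leq_eqVlt => /orP [/eqP <-|jn].
    by rewrite /G coefB coefZ [('X^n - _)`__]coefB coefXn coefC eqxx /= subr0 mulr1 subrr.
  have Fj : F`_j = 0 by move/leq_sizeP: sF; apply.
  rewrite /G coefB coefZ [('X^n - _)`__]coefB coefXn coefC Fj.
  by rewrite gtn_eqF // gtn_eqF ?(leq_trans _ jn) //= subrr mulr0 subrr.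
have G0 : G = 0.
  apply/eqP; apply/negPn/negP => Gn.
  have allr : all (root G) rs.
    apply/allP => t Ht; rewrite /root /G hornerD hornerN hornerZ hornerD hornerN hornerXn hornerC.
    rewrite {1}EF0 hornerD hornerN hornerZ !horner_exp !hlin (Hrs t Ht) (Hal t Ht).
    by rewrite !subrr mulr0 subrr.
  have := max_poly_roots Gn allr urs; rewrite srs => H.
  by have := leq_trans H sG; rewrite ltnn.
have EF : F = F`_n *: ('X^n - al'%:P) by apply/eqP; rewrite -subr_eq0 -/G G0.
have dq : (q ^+ n)^`() = q1%:P * q ^+ m.+2 *+ n by exact: dlin.
have dp : (p ^+ n)^`() = p1%:P * p ^+ m.+2 *+ n by exact: dlin.
have dq2 : (q ^+ m.+2)^`() = q1%:P * q ^+ m.+1 *+ m.+2 by exact: dlin.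
have dp2 : (p ^+ m.+2)^`() = p1%:P * p ^+ m.+1 *+ m.+2 by exact: dlin.
have dF : F^`() = q1%:P * q ^+ m.+2 *+ n - al *: (p1%:P * p ^+ m.+2 *+ n).
  by rewrite EF0 derivB derivZ dq dp.
have dF2 : F^`()^`() = q1%:P * (q1%:P * q ^+ m.+1 *+ m.+2) *+ n -
     al *: (p1%:P * (p1%:P * p ^+ m.+1 *+ m.+2) *+ n).
  by rewrite dF derivB derivZ !derivMn !deriv_mulC dq2 dp2.
have dR : (F`_n *: ('X^n - al'%:P))^`() = F`_n *: ('X^(m.+2) *+ n).
  by rewrite derivZ derivB derivXn derivC subr0.
have dR2 : (F`_n *: ('X^n - al'%:P))^`()^`() = F`_n *: ('X^(m.+1) *+ m.+2 *+ n).
  by rewrite dR derivZ derivMn derivXn.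
have E1 : (F^`()).[0] = 0.
  by rewrite {1}EF dR hornerZ hornerMn hornerXn expr0n mul0rn mulr0.
have E2 : (F^`()^`()).[0] = 0.
  by rewrite {1}EF dR2 hornerZ !hornerMn hornerXn expr0n !mul0rn mulr0.
have q00 : q.[0] = q0 by rewrite hlin mulr0 addr0.
have p00 : p.[0] = p0 by rewrite hlin mulr0 addr0.
move: E1; rewrite dF hornerD hornerN hornerZ !hornerMn !hornerCM !horner_exp q00 p00.
move=> E1; move: E2; rewrite dF2 hornerD hornerN hornerZ !hornerMn !hornerCM !hornerMn !hornerCM !horner_exp q00 p00.
move=> E2.
have e1 : q1 * q0 ^+ m.+2 = al * (p1 * p0 ^+ m.+2).
  move: E1; rewrite mulrnAr -mulrnBl -mulr_natr => /eqP.
  by rewrite mulf_eq0 (negbTE n0) orbF subr_eq0 => /eqP.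
have e2 : q1 * (q1 * q0 ^+ m.+1) = al * (p1 * (p1 * p0 ^+ m.+1)).
  move: E2; rewrite !mulrnAr -!mulrnA -mulrnBl -mulr_natr natrM => /eqP.
  by rewrite !mulf_eq0 (negbTE n0) (negbTE n1) !orbF subr_eq0 => /eqP.
have [q10|q1n] := eqVneq q1 0.
  right; split=> //; move: e1; rewrite q10 mul0r => /esym/eqP.
  rewrite mulf_eq0 (negbTE al0) /= mulf_eq0 => /orP [/eqP p10|].
    by move: nd; rewrite q10 p10 mulr0 mul0r subrr eqxx.
  by rewrite expf_eq0 /= => /eqP.
have [q0z|q0n] := eqVneq q0 0.
  left; split=> //; move: e1; rewrite q0z expr0n /= mulr0 => /esym/eqP.
  rewrite mulf_eq0 (negbTE al0) /= mulf_eq0 => /orP [/eqP //|].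
  by rewrite expf_eq0 /= => /eqP p0z; move: nd; rewrite q0z p0z mulr0 mul0r subrr eqxx.
exfalso; move: e1 e2; rewrite !exprS.
move: (q0 ^+ m) (p0 ^+ m) (expf_neq0 m q0n) => X Y Xn e1 e2.
have key : al * (p1 * (p0 * (p0 * Y))) * (p0 * q1 - p1 * q0) = 0.
  have -> : al * (p1 * (p0 * (p0 * Y))) * (p0 * q1 - p1 * q0) =
     q1 * p0 * (al * (p1 * (p0 * (p0 * Y)))) - p0 * q0 * (al * (p1 * (p1 * (p0 * Y)))) by ring.
  by rewrite -e1 -e2; ring.
have nz : al * (p1 * (p0 * (p0 * Y))) != 0.
  by rewrite -e1 !mulf_neq0.
by move/eqP: key; rewrite mulf_eq0 (negbTE nz) (negbTE nd).
Qed.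

End Mob.


Section AlgS.
Variable K : closedFieldType.

Lemma poly5_zero (e0 e1 e2 e3 e4 : K) (rs : seq K) :
  uniq rs -> (5 <= size rs)%N ->
  (forall t, t \in rs -> e0 + e1 * t + e2 * t ^+ 2 + e3 * t ^+ 3 + e4 * t ^+ 4 = 0) ->
  [/\ e0 = 0, e1 = 0, e2 = 0, e3 = 0 & e4 = 0].
Proof.
move=> urs srs H.
set P := Poly [:: e0; e1; e2; e3; e4].
have P0 : P = 0.
  apply/eqP; apply/negPn/negP => Pn.
  have allr : all (root P) rs.
    apply/allP => t Ht; rewrite /root /P horner_Poly /=; apply/eqP; rewrite -[X in _ = X](H t Ht); ring.
  have := max_poly_roots Pn allr urs => H1.
  have H2 := size_Poly [:: e0; e1; e2; e3; e4].
  by have := leq_trans (leq_ltn_trans srs H1) H2.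
have c i : [:: e0; e1; e2; e3; e4]`_i = 0 by rewrite -coef_Poly -/P P0 coef0.
by split; [exact: (c 0%N)|exact: (c 1%N)|exact: (c 2%N)|exact: (c 3%N)|exact: (c 4%N)].
Qed.

Lemma alg (m : nat) (a0 a1 a2 b0 b1 b2 c0 c1 c2 al al' : K) (rs : seq K) :
  m.+3%:R != 0 :> K -> m.+2%:R != 0 :> K -> al != 0 -> (2 <= m)%N ->
  det3 a0 b0 c0 a1 b1 c1 a2 b2 c2 != 0 ->
  uniq rs -> size rs = m.+3 -> (forall t, t \in rs -> t ^+ m.+3 = al') ->
  (forall t, t \in rs -> exists u mu, [/\ u ^+ m.+3 = al, mu != 0,
      a0 + a1 * t + a2 * t ^+ 2 = mu, b0 + b1 * t + b2 * t ^+ 2 = mu * u &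
      c0 + c1 * t + c2 * t ^+ 2 = mu * u ^+ 2]) ->
  b0 = 0 /\ b2 = 0.
Proof.
move=> n0 n1 al0 m2 nd urs srs Hal Hrs.
have srs5 : (5 <= size rs)%N by rewrite srs.
have HH : forall t, t \in rs -> (b0 ^+ 2 - a0 * c0) + (2%:R * b0 * b1 - a0 * c1 - a1 * c0) * t +
    (b1 ^+ 2 + 2%:R * b0 * b2 - a0 * c2 - a1 * c1 - a2 * c0) * t ^+ 2 +
    (2%:R * b1 * b2 - a1 * c2 - a2 * c1) * t ^+ 3 + (b2 ^+ 2 - a2 * c2) * t ^+ 4 = 0.
  move=> t Ht; have [u [mu [_ _ Ha Hb Hc]]] := Hrs t Ht.
  have -> : 0 = (b0 + b1 * t + b2 * t ^+ 2) ^+ 2 - (a0 + a1 * t + a2 * t ^+ 2) * (c0 + c1 * t + c2 * t ^+ 2).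
    by rewrite Ha Hb Hc; ring.
  by ring.
have [E0 E1 E2 E3 E4] := poly5_zero urs srs5 HH.
set a := fun t => a0 + a1 * t + a2 * t ^+ 2.
set b := fun t => b0 + b1 * t + b2 * t ^+ 2.
set c := fun t => c0 + c1 * t + c2 * t ^+ 2.
have Ebac t : b t ^+ 2 = a t * c t.
  apply/eqP; rewrite -subr_eq0; apply/eqP.
  have -> : b t ^+ 2 - a t * c t = (b0 ^+ 2 - a0 * c0) + (2%:R * b0 * b1 - a0 * c1 - a1 * c0) * t +
    (b1 ^+ 2 + 2%:R * b0 * b2 - a0 * c2 - a1 * c1 - a2 * c0) * t ^+ 2 +
    (2%:R * b1 * b2 - a1 * c2 - a2 * c1) * t ^+ 3 + (b2 ^+ 2 - a2 * c2) * t ^+ 4.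
    by rewrite /a /b /c; ring.
  by rewrite E0 E1 E2 E3 E4; ring.
have Eder t : (a1 + 2%:R * a2 * t) * c t = 2%:R * b t * (b1 + 2%:R * b2 * t) - a t * (c1 + 2%:R * c2 * t).
  apply/eqP; rewrite -subr_eq0; apply/eqP.
  have -> : (a1 + 2%:R * a2 * t) * c t - (2%:R * b t * (b1 + 2%:R * b2 * t) - a t * (c1 + 2%:R * c2 * t)) =
    - ((2%:R * b0 * b1 - a0 * c1 - a1 * c0) + 2%:R * (b1 ^+ 2 + 2%:R * b0 * b2 - a0 * c2 - a1 * c1 - a2 * c0) * t +
    3%:R * (2%:R * b1 * b2 - a1 * c2 - a2 * c1) * t ^+ 2 + 4%:R * (b2 ^+ 2 - a2 * c2) * t ^+ 3).
    by rewrite /a /b /c; ring.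
  by rewrite E1 E2 E3 E4; ring.
have sing r : a r = 0 -> c r = 0 -> False.
  move=> ar cr; have br : b r = 0 by apply/eqP; rewrite -sqrf_eq0 Ebac ar mul0r.
  move: nd; have -> : det3 a0 b0 c0 a1 b1 c1 a2 b2 c2 = det3 (a r) (b r) (c r) a1 b1 c1 a2 b2 c2.
    by rewrite /det3 /a /b /c; ring.
  by rewrite ar br cr /det3 !mul0r !subrr addr0 eqxx.
have broot r : a r = 0 -> b r = 0.
  by move=> ar; apply/eqP; rewrite -sqrf_eq0 Ebac ar mul0r.
have droot r : a r = 0 -> a1 + 2%:R * a2 * r = 0.
  move=> ar; have br := broot r ar; have := Eder r; rewrite ar br !mulr0 !mul0r subrr.
  move/eqP; rewrite mulf_eq0 => /orP [/eqP //|/eqP cr]; case: (sing r ar cr).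
have [a2z|a2n] := eqVneq a2 0.
  have [a1z|a1n] := eqVneq a1 0.
    have a0n : a0 != 0.
      apply/negP => /eqP a0z; move: nd; have -> : det3 a0 b0 c0 a1 b1 c1 a2 b2 c2 = 0 by rewrite a0z a1z a2z /det3; ring.
      by rewrite eqxx.
    have b2z : b2 = 0 by apply/eqP; rewrite -sqrf_eq0; apply/eqP; move/eqP: E4; rewrite a2z mul0r subr0 => /eqP.
    have b1n : b1 != 0.
      apply/negP => /eqP b1z; move: nd.
      have -> : det3 a0 b0 c0 a1 b1 c1 a2 b2 c2 = 0 by rewrite a1z a2z b1z b2z /det3; ring.
      by rewrite eqxx.
    have ndm : a0 * b1 - 0 * b0 != 0 by rewrite mul0r subr0 mulf_neq0.
    have := @mob K m a0 0 b0 b1 al al' rs n0 n1 al0 ndm urs srs Hal.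
    case.
    - move=> t Ht; have [u [mu [Hu mu0 Ha Hb Hc]]] := Hrs t Ht.
      move: Ha Hb; rewrite a1z a2z b2z !mul0r !addr0 => Ha Hb.
      by rewrite Hb Ha exprMn Hu mulrC.
    - by case=> ->; rewrite b2z.
    - by case=> b1z; rewrite b1z eqxx in b1n.
  exfalso; set r := - a0 / a1.
  have ar : a r = 0 by rewrite /a /r a2z mul0r addr0; field.
  have := droot r ar; rewrite a2z mulr0 mul0r addr0 => a1z.
  by rewrite a1z eqxx in a1n.
have [r Hr] := @GRing.solve_monicpoly K 2 (fun i => if i == 0%N then - a0 / a2 else - a1 / a2) isT.
rewrite !big_ord_recl big_ord0 /= addr0 in Hr.
have ar : a r = 0 by rewrite /a Hr; field.
have br := broot r ar.
have dr := droot r ar.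
have a1e : a1 = - (2%:R * a2 * r) by apply/eqP; rewrite -subr_eq0 opprK; apply/eqP.
have a0e : a0 = a2 * r ^+ 2.
  by apply/eqP; rewrite -subr_eq0; apply/eqP; rewrite -[RHS]ar /a a1e; ring.
have b0e : b0 = - (b1 * r) - b2 * r ^+ 2.
  by apply/eqP; rewrite -subr_eq0; apply/eqP; rewrite -[RHS]br /b; ring.
set p0 := - (a2 * r); set q0 := b1 + b2 * r.
have ndm : p0 * b2 - a2 * q0 != 0.
  apply/negP => /eqP H0.
  have b1e : b1 = - (2%:R * b2 * r).
    have : a2 * (b1 + 2%:R * b2 * r) = 0 by rewrite -oppr0 -H0 /p0 /q0; ring.
    move/eqP; rewrite mulf_eq0 (negbTE a2n) /= => /eqP H1.
    by apply/eqP; rewrite -subr_eq0 opprK H1.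
  move: nd; have -> : det3 a0 b0 c0 a1 b1 c1 a2 b2 c2 = 0.
    by rewrite b0e a0e a1e b1e /det3; ring.
  by rewrite eqxx.
have := @mob K m p0 a2 q0 b2 al al' rs n0 n1 al0 ndm urs srs Hal.
case.
- move=> t Ht; have [u [mu [Hu mu0 Ha Hb Hc]]] := Hrs t Ht.
  have tr : t - r != 0.
    apply/negP => /eqP tr0; move: mu0; rewrite -Ha.
    have -> : t = r by apply/eqP; rewrite -subr_eq0 tr0.
    by rewrite -/(a r) ar eqxx.
  have E : q0 + b2 * t = u * (p0 + a2 * t).
    apply: (mulfI tr).
    have -> : (t - r) * (q0 + b2 * t) = b t by rewrite /b /q0 b0e; ring.
    have -> : (t - r) * (u * (p0 + a2 * t)) = u * a t by rewrite /a /p0 a0e a1e; ring.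
    by rewrite /b /a Hb Ha mulrC.
  by rewrite E exprMn Hu.
- by case=> _ a2z; rewrite a2z eqxx in a2n.
- case=> b2z p0z.
  have r0 : r = 0.
    by move/eqP: p0z; rewrite /p0 oppr_eq0 mulf_eq0 (negbTE a2n) /= => /eqP.
  by rewrite b0e b2z r0; split=> //; ring.
Qed.

End AlgS.

Section Final.
Variable K : fieldType.
Implicit Types u v w x U W V X Y Z : vec K.

Lemma fa_lin U W V a b c X Y Z :
  fa U W V (vlc a b c X Y Z) = a * fa U W V X + b * fa U W V Y + c * fa U W V Z.
Proof. by rewrite !fa_dot dot_vlc. Qed.
Lemma fb_lin U W V a b c X Y Z :
  fb U W V (vlc a b c X Y Z) = a * fb U W V X + b * fb U W V Y + c * fb U W V Z.
Proof. by rewrite !fb_dot dot_vlc. Qed.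
Lemma fc_lin U W V a b c X Y Z :
  fc U W V (vlc a b c X Y Z) = a * fc U W V X + b * fc U W V Y + c * fc U W V Z.
Proof. by rewrite !fc_dot dot_vlc. Qed.

Lemma det_cross13 u v w : det u v w = - dot v (cross u w).
Proof. by case: u v w => ? ? ? [? ? ?] [? ? ?]; rewrite /det /dot /=; ring. Qed.

Lemma cross_nz13 u v w : det u v w != 0 -> cross u w <> v0 K.
Proof. by move=> H E; move: H; rewrite det_cross13 E /dot /= !mulr0 !addr0 oppr0 eqxx. Qed.

Lemma vsc_vsc a b u : vsc a (vsc b u) = vsc (a * b) u.
Proof. by case: u => ? ? ?; apply: vecP => /=; ring. Qed.

Lemma frame_param U W V (P : pt K) mu m : det U W V != 0 -> mu != 0 ->
  tr P = vsc mu (vlc 1 m (m ^+ 2) U W V) ->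
  fa U W V (tr P) = mu /\ fb U W V (tr P) = mu * m.
Proof.
move=> HD mu0 E; rewrite E vsc_vlc fa_lc // fb_lc //; split=> //; ring.
Qed.

End Final.

Lemma nat_nz (K : fieldType) (n k : nat) :
  (forall p : nat, p \in [pchar K] -> (5 <= p)%N /\ (n < p)%N) ->
  (0 < k)%N -> (k <= n)%N -> k%:R != 0 :> K.
Proof.
move=> Hp k0 kn; apply/negP => H.
have [p Hp'] := natf0_pchar k0 H.
have := dvdn_pcharf Hp' k; rewrite H => /dvdn_leq => /(_ k0) pk.
have [_ np] := Hp p Hp'.
by have := leq_ltn_trans (leq_trans pk kn) np; rewrite ltnn.
Qed.

Lemma det_frame (K : fieldType) (U W V X Y Z : vec K) : det U W V != 0 ->
  det X Y Z = det3 (fa U W V X) (fb U W V X) (fc U W V X) (fa U W V Y) (fb U W V Y) (fc U W V Y)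
                   (fa U W V Z) (fb U W V Z) (fc U W V Z) * det U W V.
Proof.
move=> HD; rewrite -det_lc -!cramer //.
Qed.

Lemma vsc_inv (K : fieldType) (k : K) (u : vec K) : k != 0 -> u = vsc k^-1 (vsc k u).
Proof. by case: u => ? ? ? Hk; apply: vecP => /=; field. Qed.

Unset Implicit Arguments.

Theorem proposition4p12 (K : closedFieldType) (n : nat)
  (G1 G2 G3 D1 D2 D3 : seq (pt K)) (CG CD : 'M[K]_3) (l s : pt K) :
  (forall p : nat, p \in [pchar K] -> (5 <= p)%N /\ (n < p)%N) ->
  dual3net n G1 G2 G3 -> dual3net n D1 D2 D3 ->
  irreducible_conic CG -> {in G1 ++ G2, forall P, on_conic CG P} ->
  {in G3, forall P, inc P l} ->
  irreducible_conic CD -> {in D1 ++ D2, forall P, on_conic CD P} ->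
  {in D3, forall P, inc P s} ->
  (5 <= n)%N -> G1 =i D1 ->
  l = s.
Proof.
move=> Hp HG HD HCG HG12 HG3 HCD HD12 HD3 Hn5 GD.
destruct n as [|[|[|m]]]; try by [].
have n0 : m.+3%:R != 0 :> K := @nat_nz K m.+3 m.+3 Hp isT (leqnn _).
have n1 : m.+2%:R != 0 :> K := @nat_nz K m.+3 m.+2 Hp isT (leqnSn _).
have m2 : (2 <= m)%N by [].
have [Us [Ws [Vs [al [dG lU lV al0 HGf]]]]] := frame_exists (isT : (2 <= m.+3)%N) n0 HG HCG HG12 HG3.
have [Us' [Ws' [Vs' [al' [dD sU sV al0' HDf]]]]] := frame_exists (isT : (2 <= m.+3)%N) n0 HD HCD HD12 HD3.
set g := fun P => fb Us' Ws' Vs' (tr P) / fa Us' Ws' Vs' (tr P).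
have gP P : P \in G1 -> exists2 mu', mu' != 0 &
    g P ^+ m.+3 = al' /\ tr P = vsc mu' (vlc 1 (g P) (g P ^+ 2) Us' Ws' Vs').
  move=> HP; have HP' : P \in D1 by rewrite -GD.
  have [m' [Hm' [mu' mu0 E]]] := HDf P HP'.
  have [Ea Eb] := frame_param dD mu0 E.
  have -> : g P = m' by rewrite /g Ea Eb; field.
  by exists mu'.
have [uG sG] := net_us1 HG.
set rs := map g G1.
have urs : uniq rs.
  rewrite map_inj_in_uniq // => P Q HP HQ E.
  have [muP muP0 [_ EP]] := gP P HP; have [muQ muQ0 [_ EQ]] := gP Q HQ.
  apply: (@norm_eq _ P Q (muP / muQ)); rewrite EP EQ E; exact: vsc_div.
have srs : size rs = m.+3 by rewrite size_map.
have Hal' t : t \in rs -> t ^+ m.+3 = al'.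
  by case/mapP => P HP ->; have [mu' _ [H _]] := gP P HP.
set fA := fa Us Ws Vs; set fB := fb Us Ws Vs; set fC := fc Us Ws Vs.
have Hrs t : t \in rs -> exists u mu, [/\ u ^+ m.+3 = al, mu != 0,
      fA Us' + fA Ws' * t + fA Vs' * t ^+ 2 = mu, fB Us' + fB Ws' * t + fB Vs' * t ^+ 2 = mu * u &
      fC Us' + fC Ws' * t + fC Vs' * t ^+ 2 = mu * u ^+ 2].
  case/mapP => P HP ->.
  have [mu' mu0' [_ E']] := gP P HP.
  have [mm [Hm [mu mu0 E]]] := HGf P HP.
  have EX : vlc 1 (g P) (g P ^+ 2) Us' Ws' Vs' = vlc (mu'^-1 * mu) (mu'^-1 * mu * mm) (mu'^-1 * mu * mm ^+ 2) Us Ws Vs.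
    rewrite (vsc_inv (vlc 1 (g P) (g P ^+ 2) Us' Ws' Vs') mu0') -E' E vsc_vsc vsc_vlc.
    by congr vlc; ring.
  exists mm, (mu'^-1 * mu); split=> //.
  - by rewrite mulf_neq0 // invr_eq0.
  - have -> : fA Us' + fA Ws' * g P + fA Vs' * g P ^+ 2 = fA (vlc 1 (g P) (g P ^+ 2) Us' Ws' Vs').
      by rewrite /fA fa_lin; ring.
    by rewrite EX /fA fa_lc.
  - have -> : fB Us' + fB Ws' * g P + fB Vs' * g P ^+ 2 = fB (vlc 1 (g P) (g P ^+ 2) Us' Ws' Vs').
      by rewrite /fB fb_lin; ring.
    by rewrite EX /fB fb_lc.
  - have -> : fC Us' + fC Ws' * g P + fC Vs' * g P ^+ 2 = fC (vlc 1 (g P) (g P ^+ 2) Us' Ws' Vs').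
      by rewrite /fC fc_lin; ring.
    by rewrite EX /fC fc_lc //; ring.
have ndet : det3 (fA Us') (fB Us') (fC Us') (fA Ws') (fB Ws') (fC Ws') (fA Vs') (fB Vs') (fC Vs') != 0.
  by move: dD; rewrite (det_frame _ _ _ dG) mulf_eq0 negb_or => /andP [].
have [b0z b2z] := alg n0 n1 al0 m2 ndet urs srs Hal' Hrs.
have lU' : dot (tr l) Us' = 0.
  by rewrite (cramer Us' dG) -/fA -/fB -/fC b0z dot_vlc lU lV !mulr0 !mul0r !addr0.
have lV' : dot (tr l) Vs' = 0.
  by rewrite (cramer Vs' dG) -/fA -/fB -/fC b2z dot_vlc lU lV !mulr0 !mul0r !addr0.
have cn := cross_nz13 dD.
have [k Ek] := cross_perp cn lU' lV'.
have [k' Ek'] := cross_perp cn sU sV.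
have k0 : k' != 0.
  apply/negP => /eqP k0; apply: (@tr_neq0 _ s); rewrite Ek' k0.
  by apply: vecP => /=; rewrite mul0r.
apply: (@norm_eq _ l s (k / k')); rewrite Ek Ek'; exact: vsc_div.
Qed.
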